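(* Let $u=a_1\cdots a_n$ be a word over a finite alphabet $A$ and let $i$ be a $c$-position of $u$. Let $P_i$ be the set of all predecessors of $i$, i.e. the set of positions $j$ such that there exists an X-ranker $r\mathsf X_c$ of minimal length among X-rankers reaching $i$ with $r\mathsf X_c(u)=i$ and $r(u)=j$. Then the positions in $P_i$ all have pairwise different labels.
   Context: An X-ranker is a nonempty word over $\{\mathsf X_a : a\in A\}$, length = word length. For a word $w$, $\mathsf X_a(w)$ is the smallest $a$-position of $w$ and $r\mathsf X_a(w)$ the smallest $a$-position greater than $r(w)$ (possibly undefined). The label of position $j$ of $u$ is $a_j$. *)

(* Defs.v *)
From mathcomp Require Import all_boot.
Set Implicit Arguments. Unset Strict Implicit. Unset Printing Implicit Defensive.

(* Words u = a_1 ... a_n : seq A; positions are 1..n, position j has label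
   a_j = nth _ u j.-1.  An X-ranker X_{b_1} ... X_{b_k} is represented by the
   nonempty sequence [:: b_1; ...; b_k] of letters. *)

Definition label (A : eqType) (u : seq A) (j : nat) : option A :=
  if 0 < j then onth u j.-1 else None.

(* smallest a-position of u strictly greater than p (p = 0 : "start") *)
Definition next_pos (A : eqType) (u : seq A) (a : A) (p : nat) : option nat :=
  let s := drop p u in
  let k := find (pred1 a) s in
  if k < size s then Some (p + k).+1 else None.

(* r(u): X_a(w) is the smallest a-position, r X_a(w) the smallest a-position
   greater than r(w); undefined = None *)
Definition xeval (A : eqType) (u : seq A) (r : seq A) : option nat :=
  foldl (fun o a => obind (next_pos u a) o) (Some 0) r.

Definition reaches (A : eqType) (u : seq A) (r : seq A) (i : nat) : Prop :=
  r != [::] /\ xeval u r = Some i.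

Definition min_reaching (A : eqType) (u : seq A) (r : seq A) (i : nat) : Prop :=
  reaches u r i /\ forall r', reaches u r' i -> size r <= size r'.

Definition predecessor (A : eqType) (u : seq A) (c : A) (i j : nat) : Prop :=
  exists r : seq A, [/\ r != [::], min_reaching u (rcons r c) i
                      & xeval u r = Some j].

(* Main.v *)
Require Import Defs.
From mathcomp Require Import all_boot zify.

Section Aux.
Variable A : finType.
Implicit Types (u s : seq A) (a b : A).

Lemma onth_drop u p k : onth (drop p u) k = onth u (p + k).
Proof. by rewrite !onthE map_drop nth_drop. Qed.

Lemma onth_some x0 {s k} : k < size s -> onth s k = Some (nth x0 s k).
Proof. by move=> h; rewrite onthE (nth_map x0). Qed.

Lemma label_S u p k : label u (p + k).+1 = onth (drop p u) k.
Proof. by rewrite /label /= onth_drop. Qed.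

Lemma N1 {u a p q} : next_pos u a p = Some q -> p < q /\ label u q = Some a.
Proof.
rewrite /next_pos; case: ifP => // h [<-]; split; first by rewrite ltnS leq_addr.
rewrite label_S (onth_some a h); congr Some.
by apply/eqP; apply: (@nth_find _ a (pred1 a) (drop p u)); rewrite has_find.
Qed.

Lemma N2 {u a p q k} : next_pos u a p = Some q -> p < k < q -> label u k != Some a.
Proof.
rewrite /next_pos; case: ifP => // h [<-] /andP[pk kq].
have -> : k = (p + (k.-1 - p)).+1 by case: k pk kq => // k pk kq; rewrite subnKC.
rewrite label_S.
have hk : k.-1 - p < find (pred1 a) (drop p u).
  case: k pk kq => // k pk kq; rewrite ltn_subLR //; lia.
rewrite (onth_some a (ltn_trans hk h)).
apply/negP => /eqP [] e; have := before_find a hk; by rewrite /= e eqxx.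
Qed.

Lemma N3 u a p q : p < q -> label u q = Some a ->
  (forall k, p < k < q -> label u k != Some a) -> next_pos u a p = Some q.
Proof.
move=> pq lq hb.
have eq : q = (p + (q.-1 - p)).+1 by case: q pq lq {hb} => // q pq _; rewrite subnKC.
set k0 := q.-1 - p in eq.
have o0 : onth (drop p u) k0 = Some a by rewrite -label_S -eq.
have s0 : k0 < size (drop p u) by rewrite -onthTE o0.
rewrite /next_pos.
have hf : find (pred1 a) (drop p u) = k0.
  case: (ltngtP (find (pred1 a) (drop p u)) k0) => // h.
  - have := hb (p + find (pred1 a) (drop p u)).+1.
    rewrite label_S (onth_some a (ltn_trans h s0)).
    have -> : nth a (drop p u) (find (pred1 a) (drop p u)) = a.
      by apply/eqP; apply: (@nth_find _ a (pred1 a) (drop p u)); rewrite has_find (ltn_trans h s0).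
    rewrite eqxx => /(_ _)/negP; case; last by [].
    by apply/andP; split; [rewrite ltnS leq_addr | rewrite eq ltnS ltn_add2l].
  - have := before_find a h.
    by move: o0; rewrite (onth_some a s0) => -[->]; rewrite /= eqxx.
by rewrite hf s0 -eq.
Qed.

Lemma xeval_rcons u r a : xeval u (rcons r a) = obind (next_pos u a) (xeval u r).
Proof. by rewrite /xeval foldl_rcons. Qed.

Lemma pred_decomp {u c i j} : predecessor u c i j ->
  exists r' b p, [/\ min_reaching u (rcons (rcons r' b) c) i,
                  xeval u r' = Some p, next_pos u b p = Some j
                  & next_pos u c j = Some i].
Proof.
case=> r [rn mr xr]; case/lastP: r rn mr xr => // r' b _ mr xr.
move: xr; rewrite xeval_rcons; case e: (xeval u r') => [p|] //= np.
exists r', b, p; split => //.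
by case: mr => [[_]]; rewrite xeval_rcons xeval_rcons e /= np.
Qed.

Lemma key {u c i j1 j2} : predecessor u c i j1 -> predecessor u c i j2 ->
  label u j1 = label u j2 -> j1 < j2 -> False.
Proof.
move=> /pred_decomp [r1 [b1 [p1 [m1 x1 n1 c1]]]].
move=> /pred_decomp [r2 [b2 [p2 [m2 x2 n2 c2]]]] ll lt.
have [pj1 l1] := N1 n1; have [pj2 l2] := N1 n2.
have [ji1 li] := N1 c1; have [ji2 _] := N1 c2.
rewrite l1 l2 in ll; case: ll => eb; subst b2.
have hp : j1 <= p2.
  rewrite leqNgt; apply/negP => h.
  by have := N2 n2 (k:=j1); rewrite h lt l1 eqxx => /(_ isT).
have bc : b1 != c.
  apply/negP => /eqP e; subst b1.
  by have := N2 c1 (k:=j2); rewrite lt ji2 l2 eqxx => /(_ isT).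
have nc : next_pos u c p2 = Some i.
  apply: N3 => //; first by lia.
  move=> k /andP[pk ki]; apply: (N2 c1); rewrite ki andbT.
  lia.
have r2c : reaches u (rcons r2 c) i.
  by split; [case: (r2) | rewrite xeval_rcons x2].
have h1 := (proj2 m1) _ r2c.
have h2 := (proj2 m2) _ (proj1 m1).
move: h1 h2; rewrite !size_rcons; lia.
Qed.
End Aux.

Theorem lemma22 (A : finType) (u : seq A) (c : A) (i : nat) :
  label u i = Some c ->
  forall j1 j2 : nat,
    predecessor u c i j1 -> predecessor u c i j2 ->
    label u j1 = label u j2 -> j1 = j2.
Proof.
move=> _ j1 j2 h1 h2 ll.
case: (ltngtP j1 j2) => // h.
- by case: (key _ h1 h2 ll h).
- by case: (key _ h2 h1 (esym ll) h).
Qed.
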